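(* Let $k>1$ and let $f:\mathbb{R}\to\mathbb{R}$ be a positive, continuously differentiable function, and consider the planar system $$\frac{dI}{d\tau}=I\,[f(R)(1-I-R)-k],\qquad \frac{dR}{d\tau}=(k-1)I-R.$$ If $f(0)/k<1$ and $(0,0)$ is the only equilibrium point of this system, then $(0,0)$ is globally stable.
   Context: Here ''globally stable'' means: $(0,0)$ is locally asymptotically stable and every solution with initial condition $(I(0),R(0))$ in the region $Z=\{(I,R): 0\le I\le 1,\ 0\le R\le 1,\ I+R\le 1\}$ (the region corresponding to meaningful population proportions, which is positively invariant) converges to $(0,0)$ as $\tau\to\infty$. *)

(* Defs.v *)
From Stdlib Require Import Reals.
From Coquelicot Require Import Coquelicot.
Open Scope R_scope.

Definition FI (f : R -> R) (k I Rv : R) : R := I * (f Rv * (1 - I - Rv) - k).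
Definition FR (k I Rv : R) : R := (k - 1) * I - Rv.

Definition is_solution (f : R -> R) (k : R) (T : Rbar) (x y : R -> R) : Prop :=
  forall t : R, 0 <= t -> Rbar_lt t T ->
    is_derive x t (FI f k (x t) (y t)) /\ is_derive y t (FR k (x t) (y t)).

Definition in_Z (I Rv : R) : Prop :=
  0 <= I <= 1 /\ 0 <= Rv <= 1 /\ I + Rv <= 1.

Definition is_equilibrium (f : R -> R) (k I Rv : R) : Prop :=
  FI f k I Rv = 0 /\ FR k I Rv = 0.

Definition dist0 (I Rv : R) : R := sqrt (I ^ 2 + Rv ^ 2).

Definition stable_origin (f : R -> R) (k : R) : Prop :=
  forall eps : R, 0 < eps -> exists delta : R, 0 < delta /\
    forall (T : Rbar) (x y : R -> R), Rbar_lt 0 T -> is_solution f k T x y ->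
      dist0 (x 0) (y 0) < delta ->
      forall t : R, 0 <= t -> Rbar_lt t T -> dist0 (x t) (y t) < eps.

Definition converges_origin (x y : R -> R) : Prop :=
  is_lim x p_infty 0 /\ is_lim y p_infty 0.

Definition attractive_origin (f : R -> R) (k : R) : Prop :=
  exists delta : R, 0 < delta /\
    forall x y : R -> R, is_solution f k p_infty x y ->
      dist0 (x 0) (y 0) < delta -> converges_origin x y.

Definition loc_asympt_stable_origin (f : R -> R) (k : R) : Prop :=
  stable_origin f k /\ attractive_origin f k.

(* Global stability as defined in the paper (relative to the region Z). *)
Definition globally_stable_origin (f : R -> R) (k : R) : Prop :=
  loc_asympt_stable_origin f k /\
  forall x y : R -> R, is_solution f k p_infty x y ->
    in_Z (x 0) (y 0) -> converges_origin x y.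

(* Main.v *)
Require Import Defs.
From Stdlib Require Import Reals.
From Coquelicot Require Import Coquelicot.
From Stdlib Require Import Lra Classical.
Open Scope R_scope.


Lemma cont_eps (h : R -> R) t l : is_derive h t l ->
  forall e, 0 < e -> exists d, 0 < d /\ forall r, Rabs (r - t) < d -> Rabs (h r - h t) < e.
Proof.
  intros Hd e He. apply is_derive_Reals in Hd.
  destruct (Hd 1 Rlt_0_1) as [d0 Hd0].
  assert (Hl : 0 < Rabs l + 1) by (pose proof (Rabs_pos l); lra).
  exists (Rmin d0 (e / (Rabs l + 1))). split.
  { apply Rmin_pos. apply cond_pos. apply Rdiv_lt_0_compat; lra. }
  intros r Hr.
  destruct (Req_dec r t) as [->|Hne].
  { replace (h t - h t) with 0 by ring. rewrite Rabs_R0. exact He. }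
  assert (Hs : r - t <> 0) by lra.
  assert (Hr1 : Rabs (r - t) < d0) by (eapply Rlt_le_trans; [exact Hr| apply Rmin_l]).
  assert (Hr2 : Rabs (r - t) < e / (Rabs l + 1)) by (eapply Rlt_le_trans; [exact Hr| apply Rmin_r]).
  specialize (Hd0 (r - t) Hs Hr1).
  replace (t + (r - t)) with r in Hd0 by ring.
  set (q := (h r - h t) / (r - t)) in *.
  assert (Hq : h r - h t = q * (r - t)) by (unfold q; field; exact Hs).
  rewrite Hq, Rabs_mult.
  assert (Hq1 : Rabs q < Rabs l + 1).
  { pose proof (Rabs_triang (q - l) l). replace (q - l + l) with q in H by ring. lra. }
  apply (Rmult_lt_compat_r (Rabs l + 1)) in Hr2; [|lra].
  replace (e / (Rabs l + 1) * (Rabs l + 1)) with e in Hr2 by (field; lra).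
  pose proof (Rabs_pos q). pose proof (Rabs_pos (r - t)).
  nra.
Qed.

Lemma left_sign (h : R -> R) t l : is_derive h t l -> l < 0 ->
  exists d, 0 < d /\ forall r, t - d < r < t -> h t < h r.
Proof.
  intros Hd Hl. apply is_derive_Reals in Hd.
  destruct (Hd (- l / 2)) as [d0 Hd0]; [lra|].
  exists d0. split; [apply cond_pos|].
  intros r Hr.
  assert (Hs : r - t <> 0) by lra.
  assert (Hr1 : Rabs (r - t) < d0) by (rewrite Rabs_left; lra).
  specialize (Hd0 (r - t) Hs Hr1).
  replace (t + (r - t)) with r in Hd0 by ring.
  set (q := (h r - h t) / (r - t)) in *.
  assert (Hq : h r - h t = q * (r - t)) by (unfold q; field; exact Hs).
  apply Rabs_def2 in Hd0. nra.
Qed.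

Lemma mono (h d : R -> R) a b : a <= b ->
  (forall c, a <= c <= b -> is_derive h c (d c)) ->
  (forall c, a <= c <= b -> 0 <= d c) -> h a <= h b.
Proof.
  intros Hab Hd Hp. destruct (Req_dec a b) as [->|Hne]; [lra|].
  destruct (MVT_cor2 h d a b) as [c [Hc1 Hc2]]; [lra| |].
  { intros c Hc. apply is_derive_Reals. apply Hd. exact Hc. }
  assert (0 <= d c) by (apply Hp; lra). nra.
Qed.

Lemma deriv_cont (h : R -> R) t l : is_derive h t l -> continuity_pt h t.
Proof.
  intros Hd. apply is_derive_Reals in Hd.
  apply derivable_continuous_pt. exists l. exact Hd.
Qed.

Lemma Rbar_lt_le_trans' (r t1 : R) (T : Rbar) : r <= t1 -> Rbar_lt t1 T -> Rbar_lt r T.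
Proof. destruct T; simpl; auto; lra. Qed.

Lemma lim_left_nonpos h s l : is_derive h s l -> 0 < s ->
  (forall r, 0 <= r < s -> h r < 0) -> h s <= 0.
Proof.
  intros Hd Hs Hr. destruct (Rle_dec (h s) 0) as [|Hn]; [auto|].
  exfalso. destruct (cont_eps h s l Hd (h s)) as [d [Hd0 Hc]]; [lra|].
  set (r := Rmax (s - d/2) (s/2)).
  assert (H1 : s - d/2 <= r) by apply Rmax_l.
  assert (H2 : s/2 <= r) by apply Rmax_r.
  assert (H3 : r < s) by (unfold r; apply Rmax_lub_lt; lra).
  specialize (Hr r ltac:(lra)). specialize (Hc r ltac:(rewrite Rabs_left; lra)).
  apply Rabs_def2 in Hc. lra.
Qed.

Lemma no_cross h s l : is_derive h s l -> 0 < s ->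
  (forall r, 0 <= r < s -> h r < 0) -> h s = 0 -> l < 0 -> False.
Proof.
  intros Hd Hs Hr H0 Hl. destruct (left_sign h s l Hd Hl) as [d [Hd0 Hc]].
  set (r := Rmax (s - d/2) (s/2)).
  assert (H1 : s - d/2 <= r) by apply Rmax_l.
  assert (H2 : s/2 <= r) by apply Rmax_r.
  assert (H3 : r < s) by (unfold r; apply Rmax_lub_lt; lra).
  specialize (Hr r ltac:(lra)). specialize (Hc r ltac:(lra)). lra.
Qed.

Lemma barrier2 (T : Rbar) (h1 h2 d1 d2 : R -> R) :
  (forall t, 0 <= t -> Rbar_lt t T -> is_derive h1 t (d1 t) /\ is_derive h2 t (d2 t)) ->
  h1 0 < 0 -> h2 0 < 0 ->
  (forall t, 0 < t -> Rbar_lt t T -> h1 t = 0 -> h2 t <= 0 -> d1 t < 0) ->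
  (forall t, 0 < t -> Rbar_lt t T -> h2 t = 0 -> h1 t <= 0 -> d2 t < 0) ->
  forall t, 0 <= t -> Rbar_lt t T -> h1 t < 0 /\ h2 t < 0.
Proof.
  intros HD H10 H20 HB1 HB2 t1 Ht1 HT1.
  set (S := fun s => 0 <= s <= t1 /\ forall r, 0 <= r <= s -> h1 r < 0 /\ h2 r < 0).
  assert (HS0 : S 0).
  { split; [lra|]. intros r Hr. replace r with 0 by lra. auto. }
  destruct (completeness S) as [sg [Hub Hlub]].
  { exists t1. intros s [Hs _]. lra. }
  { exists 0. exact HS0. }
  assert (Hsg0 : 0 <= sg) by (apply Hub; exact HS0).
  assert (Hsg1 : sg <= t1) by (apply Hlub; intros s [Hs _]; lra).
  assert (Ha : forall r, 0 <= r < sg -> h1 r < 0 /\ h2 r < 0).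
  { intros r Hr. destruct (classic (h1 r < 0 /\ h2 r < 0)) as [|Hn]; [auto|].
    exfalso. assert (sg <= r); [|lra].
    apply Hlub. intros s [Hs Hs2]. destruct (Rle_dec s r) as [|Hsr]; [auto|].
    exfalso. apply Hn. apply Hs2. lra. }
  assert (HTs : Rbar_lt sg T) by (eapply Rbar_lt_le_trans'; eauto).
  destruct (HD sg Hsg0 HTs) as [Hd1 Hd2].
  destruct (Rlt_dec (h1 sg) 0) as [Hn1|Hn1]; destruct (Rlt_dec (h2 sg) 0) as [Hn2|Hn2].
  - destruct (cont_eps h1 sg _ Hd1 (- h1 sg)) as [e1 [He1 Hc1]]; [lra|].
    destruct (cont_eps h2 sg _ Hd2 (- h2 sg)) as [e2 [He2 Hc2]]; [lra|].
    set (s' := Rmin (sg + Rmin e1 e2 / 2) t1).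
    assert (Hm1 : Rmin e1 e2 <= e1) by apply Rmin_l.
    assert (Hm2 : Rmin e1 e2 <= e2) by apply Rmin_r.
    assert (Hm0 : 0 < Rmin e1 e2) by (apply Rmin_pos; lra).
    assert (Hs'1 : s' <= sg + Rmin e1 e2 / 2) by apply Rmin_l.
    assert (Hs'2 : s' <= t1) by apply Rmin_r.
    assert (HS' : S s').
    { split. { split; [|lra]. unfold s'. apply Rmin_glb; lra. }
      intros r Hr. destruct (Rlt_dec r sg) as [|Hrs]; [apply Ha; lra|].
      specialize (Hc1 r ltac:(rewrite Rabs_pos_eq; lra)).
      specialize (Hc2 r ltac:(rewrite Rabs_pos_eq; lra)).
      apply Rabs_def2 in Hc1. apply Rabs_def2 in Hc2. lra. }
    assert (Hle : s' <= sg) by (apply Hub; exact HS').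
    assert (Ht1s : t1 <= sg).
    { destruct (Rle_dec t1 sg) as [|Hx]; [auto|].
      exfalso. unfold s' in Hle. 
      destruct (Rle_dec (sg + Rmin e1 e2 / 2) t1).
      + rewrite Rmin_left in Hle; lra.
      + rewrite Rmin_right in Hle; lra. }
    destruct HS' as [_ HS']. apply HS'. split; [lra|].
    unfold s'. apply Rmin_glb; lra.
  - exfalso. assert (Hp : 0 < sg).
    { destruct (Req_dec sg 0) as [E|]; [|lra]. rewrite E in Hn2. lra. }
    assert (E2 : h2 sg = 0).
    { pose proof (lim_left_nonpos h2 sg _ Hd2 Hp (fun r Hr => proj2 (Ha r Hr))). lra. }
    apply (no_cross h2 sg _ Hd2 Hp (fun r Hr => proj2 (Ha r Hr)) E2).
    apply HB2; auto; lra.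
  - exfalso. assert (Hp : 0 < sg).
    { destruct (Req_dec sg 0) as [E|]; [|lra]. rewrite E in Hn1. lra. }
    assert (E1 : h1 sg = 0).
    { pose proof (lim_left_nonpos h1 sg _ Hd1 Hp (fun r Hr => proj1 (Ha r Hr))). lra. }
    apply (no_cross h1 sg _ Hd1 Hp (fun r Hr => proj1 (Ha r Hr)) E1).
    apply HB1; auto; lra.
  - exfalso. assert (Hp : 0 < sg).
    { destruct (Req_dec sg 0) as [E|]; [|lra]. rewrite E in Hn1. lra. }
    assert (E1 : h1 sg = 0).
    { pose proof (lim_left_nonpos h1 sg _ Hd1 Hp (fun r Hr => proj1 (Ha r Hr))). lra. }
    assert (E2 : h2 sg <= 0) by exact (lim_left_nonpos h2 sg _ Hd2 Hp (fun r Hr => proj2 (Ha r Hr))).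
    apply (no_cross h1 sg _ Hd1 Hp (fun r Hr => proj1 (Ha r Hr)) E1).
    apply HB1; auto.
Qed.

Lemma decay_lim h mu C : 0 < mu -> 0 <= C ->
  (forall t, 0 <= t -> h t ^ 2 <= C * exp (- (mu * t))) -> is_lim h p_infty 0.
Proof.
  intros Hmu HC Hb. apply is_lim_spec. intros eps. simpl.
  pose proof (cond_pos eps) as He.
  set (K := (C + 1) / (eps * eps)).
  assert (HK : 0 < K) by (unfold K; apply Rdiv_lt_0_compat; [lra| apply Rmult_lt_0_compat; lra]).
  exists (Rmax 0 (ln K / mu)). intros x Hx.
  assert (Hx0 : 0 <= x) by (pose proof (Rmax_l 0 (ln K / mu)); lra).
  assert (Hx1 : ln K / mu < x) by (eapply Rle_lt_trans; [apply Rmax_r|exact Hx]).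
  assert (Hl : ln K < mu * x).
  { apply (Rmult_lt_compat_l mu) in Hx1; [|lra].
    replace (mu * (ln K / mu)) with (ln K) in Hx1 by (field; lra). exact Hx1. }
  apply exp_increasing in Hl. rewrite exp_ln in Hl by exact HK.
  idtac.
  assert (Hex : 0 < exp (mu * x)) by apply exp_pos.
  specialize (Hb x Hx0). rewrite exp_Ropp in Hb.
  assert (Hb2 : h x ^ 2 * exp (mu * x) <= C).
  { apply (Rmult_le_compat_r (exp (mu * x))) in Hb; [|lra].
    replace (C * / exp (mu * x) * exp (mu * x)) with C in Hb by (field; lra). exact Hb. }
  assert (HK2 : K * (eps * eps) = C + 1) by (unfold K; field; nra).
  rewrite Rminus_0_r.
  destruct (Rlt_dec (Rabs (h x)) eps) as [|Hn]; [auto|exfalso].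
  assert (Habs : h x ^ 2 = Rabs (h x) * Rabs (h x)) by (rewrite <- pow2_abs; ring).
  assert (eps * eps <= h x ^ 2) by (rewrite Habs; nra).
  assert (0 <= h x ^2) by nra.
  nra.
Qed.

Lemma deriv_eq (h : R -> R) t l l' : is_derive h t l -> l = l' -> is_derive h t l'.
Proof. intros H ->. exact H. Qed.

Lemma sq_deriv (h : R -> R) t l : is_derive h t l -> is_derive (fun s => h s ^ 2) t (2 * h t * l).
Proof.
  intros H. eapply deriv_eq. apply (is_derive_pow h 2 t l H). simpl. ring.
Qed.

Lemma lin_deriv (h1 h2 : R -> R) a b t l1 l2 : is_derive h1 t l1 -> is_derive h2 t l2 ->
  is_derive (fun s => a * h1 s + b * h2 s) t (a * l1 + b * l2).
Proof.
  intros H1 H2. apply (is_derive_plus (fun s => a * h1 s) (fun s => b * h2 s)); apply is_derive_scal; assumption.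
Qed.

Lemma mul_deriv (h1 h2 : R -> R) t l1 l2 : is_derive h1 t l1 -> is_derive h2 t l2 ->
  is_derive (fun s => h1 s * h2 s) t (l1 * h2 t + h1 t * l2).
Proof.
  intros H1 H2. eapply deriv_eq. apply (is_derive_mult h1 h2 t l1 l2 H1 H2).
  intros; apply Rmult_comm. reflexivity.
Qed.

Lemma exp_deriv a t : is_derive (fun s => exp (a * s)) t (a * exp (a * t)).
Proof. auto_derive; auto. ring. Qed.

Lemma const_deriv (a t : R) : is_derive (fun _ => a) t 0.
Proof. auto_derive; auto. Qed.

Lemma opp_deriv (h : R -> R) t l : is_derive h t l -> is_derive (fun s => - h s) t (- l).
Proof. intros H. apply (is_derive_opp h t l H). Qed.

Lemma exp_le1 x : x <= 0 -> exp x <= 1.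
Proof.
  intros H. destruct (Req_dec x 0) as [->|]; [rewrite exp_0; lra|].
  left. rewrite <- exp_0. apply exp_increasing. lra.
Qed.

Lemma sq_le a d : 0 < d -> a ^ 2 <= d ^ 2 -> Rabs a <= d.
Proof.
  intros Hd H. rewrite <- pow2_abs in H. pose proof (Rabs_pos a).
  destruct (Rle_dec (Rabs a) d); [auto|]. nra.
Qed.

Lemma local_decay f k (hk : 1 < k) (hpos : forall r, 0 < f r)
  (fd : forall r, ex_derive f r) (h0 : f 0 < k) :
  exists rho c mu, 0 < rho /\ 0 < c /\ 0 < mu /\
   forall L, 0 < L -> L <= rho -> forall T x y, is_solution f k T x y ->
   x 0 ^ 2 + c * y 0 ^ 2 < L ->
   forall t, 0 <= t -> Rbar_lt t T -> x t ^ 2 + c * y t ^ 2 < L * exp (- (mu * t)).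
Proof.
  set (kap := (k - f 0) / 2).
  assert (Hkap : 0 < kap) by (unfold kap; lra).
  pose proof (hpos 0) as Hf0.
  destruct (fd 0) as [l0 Hl0].
  destruct (cont_eps f 0 l0 Hl0 (kap / 2)) as [d1 [Hd1 Hc1]]; [lra|].
  set (del := Rmin (d1 / 2) (kap / (4 * (f 0 + kap)))).
  assert (Hdel1 : del <= d1 / 2) by apply Rmin_l.
  assert (Hdel2 : del <= kap / (4 * (f 0 + kap))) by apply Rmin_r.
  assert (Hdel : 0 < del).
  { apply Rmin_pos; [lra|]. apply Rdiv_lt_0_compat; lra. }
  assert (Hdel3 : 2 * del * (f 0 + kap) <= kap / 2).
  { apply (Rmult_le_compat_r (4 * (f 0 + kap))) in Hdel2; [|lra].
    replace (kap / (4 * (f 0 + kap)) * (4 * (f 0 + kap))) with kap in Hdel2 by (field; lra).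
    lra. }
  assert (Hg : forall a b, a ^ 2 <= del ^ 2 -> b ^ 2 <= del ^ 2 ->
             f b * (1 - a - b) - k <= - kap).
  { intros a b Ha Hb. apply sq_le in Ha; [|lra]. apply sq_le in Hb; [|lra].
    assert (Hfb : Rabs (f b - f 0) < kap / 2).
    { apply Hc1. rewrite Rminus_0_r. lra. }
    apply Rabs_def2 in Hfb.
    pose proof (Rle_abs a). pose proof (Rle_abs (- a)). rewrite Rabs_Ropp in H0.
    pose proof (Rle_abs b). pose proof (Rle_abs (- b)). rewrite Rabs_Ropp in H2.
    pose proof (hpos b).
    assert (H4 : 1 - a - b <= 1 + 2 * del) by lra.
    assert (H5 : f b * (1 - a - b) <= f b * (1 + 2 * del)) by (apply Rmult_le_compat_l; lra).
    assert (H6 : f b * (1 + 2 * del) <= (f 0 + kap / 2) * (1 + 2 * del)) by (apply Rmult_le_compat_r; lra).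
    unfold kap in *. nra. }
  set (c := kap / (k - 1) ^ 2).
  assert (Hc : 0 < c) by (unfold c; apply Rdiv_lt_0_compat; [lra| apply pow_lt; lra]).
  assert (Hck : c * (k - 1) ^ 2 = kap) by (unfold c; field; lra).
  set (rho := Rmin (del ^ 2) (c * del ^ 2)).
  assert (Hr1 : rho <= del ^ 2) by apply Rmin_l.
  assert (Hr2 : rho <= c * del ^ 2) by apply Rmin_r.
  assert (Hrho : 0 < rho) by (apply Rmin_pos; [apply pow_lt; lra| apply Rmult_lt_0_compat; [lra|apply pow_lt; lra]]).
  set (mu0 := Rmin kap 1).
  assert (Hm1 : mu0 <= kap) by apply Rmin_l.
  assert (Hm2 : mu0 <= 1) by apply Rmin_r.
  assert (Hmu0 : 0 < mu0) by (apply Rmin_pos; lra).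
  assert (HE : forall a b, a ^ 2 + c * b ^ 2 <= rho ->
     2 * a * (a * (f b * (1 - a - b) - k)) + c * (2 * b * ((k - 1) * a - b))
       <= - mu0 * (a ^ 2 + c * b ^ 2)).
  { intros a b Hab.
    assert (Ha2 : a ^ 2 <= del ^ 2) by nra.
    assert (Hb2 : b ^ 2 <= del ^ 2).
    { assert (c * b ^ 2 <= c * del ^ 2) by nra.
      apply (Rmult_le_reg_l c); lra. }
    specialize (Hg a b Ha2 Hb2).
    assert (T1 : 2 * a * (a * (f b * (1 - a - b) - k)) <= - 2 * kap * a ^ 2) by nra.
    assert (T2 : 0 <= (kap * a - c * (k - 1) * b) ^ 2) by apply pow2_ge_0.
    assert (T3 : 2 * c * (k - 1) * a * b <= kap * a ^ 2 + c * b ^ 2).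
    { apply (Rmult_le_reg_l kap); [lra|].
      assert (E : (kap * a - c * (k - 1) * b) ^ 2
                  = kap * (kap * a ^ 2 + c * b ^ 2) - kap * (2 * c * (k - 1) * a * b)).
      { replace (c * b ^ 2) with (c * b ^ 2 * 1) by ring.
        rewrite <- (Rmult_1_r (c * b ^ 2)).
        transitivity (kap ^ 2 * a ^ 2 - 2 * kap * c * (k - 1) * a * b + c * (c * (k - 1) ^ 2) * b ^ 2); [ring|].
        rewrite Hck. ring. }
      nra. }
    assert (0 <= a ^ 2) by apply pow2_ge_0.
    assert (0 <= c * b ^ 2) by (apply Rmult_le_pos; [lra|apply pow2_ge_0]).
    nra. }
  exists rho, c, (mu0 / 2). split; [exact Hrho|]. split; [exact Hc|]. split; [lra|].
  intros L HL HLr T x y Hs H0 t Ht HT.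
  set (h1 := fun s => 1 * (1 * x s ^ 2 + c * y s ^ 2) + (- L) * exp ((- (mu0 / 2)) * s)).
  assert (Hb := barrier2 T h1 (fun _ => -1)
     (fun s => 1 * (1 * (2 * x s * FI f k (x s) (y s)) + c * (2 * y s * FR k (x s) (y s)))
               + (- L) * ((- (mu0 / 2)) * exp ((- (mu0 / 2)) * s)))
     (fun _ => 0)).
  assert (Hb1 : h1 t < 0 /\ -1 < 0).
  { apply Hb; auto.
  - intros s Hs0 HsT. destruct (Hs s Hs0 HsT) as [Dx Dy]. split.
    + apply lin_deriv; [apply lin_deriv; apply sq_deriv; auto|apply exp_deriv].
    + apply const_deriv.
  - unfold h1. rewrite Rmult_0_r, exp_0. lra.
  - lra.
  - intros s Hs0 HsT Hh1 _. unfold h1 in Hh1; cbv beta in Hh1.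
    assert (He : 0 < exp (- (mu0 / 2) * s)) by apply exp_pos.
    assert (He1 : exp (- (mu0 / 2) * s) <= 1) by (apply exp_le1; nra).
    assert (HEs : x s ^ 2 + c * y s ^ 2 = L * exp (- (mu0 / 2) * s)) by lra.
    assert (Hreg : x s ^ 2 + c * y s ^ 2 <= rho) by nra.
    specialize (HE (x s) (y s) Hreg). unfold FI, FR.
    assert (0 < L * exp (- (mu0 / 2) * s)) by (apply Rmult_lt_0_compat; lra).
    nra.
  - intros; lra. }
  destruct Hb1 as [Hb1 _].
  unfold h1 in Hb1; cbv beta in Hb1. replace (- (mu0 / 2 * t)) with (- (mu0 / 2) * t) by ring. lra.
Qed.

Lemma fcont f (fd : forall r, ex_derive f r) r : continuity_pt f r.
Proof. destruct (fd r) as [l Hl]. exact (deriv_cont f r l Hl). Qed.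

Lemma gamma_bound f k (hk : 1 < k) (hpos : forall r, 0 < f r)
  (fd : forall r, ex_derive f r) (h0 : f 0 < k)
  (huniq : forall I Rv : R, in_Z I Rv -> is_equilibrium f k I Rv -> I = 0 /\ Rv = 0) :
  exists gam, 0 < gam /\ forall u, 0 <= u -> f ((k - 1) * u) * (1 - k * u) - k <= - gam.
Proof.
  set (G := fun u => f ((k - 1) * u) * (1 - k * u) - k).
  assert (HGc : forall u, continuity_pt G u).
  { intros u. unfold G. apply continuity_pt_minus; [|apply continuity_pt_const; intros a b; auto].
    apply continuity_pt_mult.
    - apply (continuity_pt_comp (fun u => (k - 1) * u) f).
      + apply continuity_pt_mult; [apply continuity_pt_const; intros a b; auto| apply derivable_continuous_pt; apply derivable_pt_id].
      + apply fcont; auto.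
    - apply continuity_pt_minus; [apply continuity_pt_const; intros a b; auto|].
      apply continuity_pt_mult; [apply continuity_pt_const; intros a b; auto| apply derivable_continuous_pt; apply derivable_pt_id]. }
  assert (HG0 : G 0 < 0).
  { unfold G. replace ((k - 1) * 0) with 0 by ring. lra. }
  assert (Hk0 : 0 < 1 / k) by (apply Rdiv_lt_0_compat; lra).
  assert (Hk1 : 1 / k < 1) by (apply (Rmult_lt_reg_l k); [lra|]; field_simplify; lra).
  assert (Hnz : forall z, 0 <= z <= 1 / k -> G z <> 0).
  { intros z Hz HGz.
    assert (Hkz : k * z <= 1).
    { destruct Hz as [_ Hz]. apply (Rmult_le_compat_l k) in Hz; [|lra].
      replace (k * (1 / k)) with 1 in Hz by (field; lra). exact Hz. }
    destruct (huniq z ((k - 1) * z)) as [Ez _].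
    - split; [lra|]. split; [split; nra|]. nra.
    - split.
      + unfold FI. unfold G in HGz.
        replace (1 - z - (k - 1) * z) with (1 - k * z) by ring. rewrite HGz. ring.
      + unfold FR. ring.
    - subst z. lra. }
  destruct (continuity_ab_maj G 0 (1 / k)) as [Mx [HMx HMxi]]; [lra| intros; apply HGc|].
  assert (HGM : G Mx < 0).
  { destruct (Rlt_dec (G Mx) 0) as [|Hn]; [auto|exfalso].
    destruct (Req_dec (G Mx) 0) as [E|Hne]; [exact (Hnz Mx HMxi E)|].
    assert (HMp : 0 < Mx).
    { destruct (Req_dec Mx 0) as [E|]; [|lra]. rewrite E in Hn. lra. }
    destruct (Ranalysis5.IVT_interv G 0 Mx) as [z [Hz Ez]].
    - intros; apply HGc.
    - exact HMp.
    - exact HG0.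
    - lra.
    - apply (Hnz z); [lra|exact Ez]. }
  exists (Rmin k (- G Mx)). split; [apply Rmin_pos; lra|].
  intros u Hu. pose proof (Rmin_l k (- G Mx)). pose proof (Rmin_r k (- G Mx)).
  destruct (Rle_dec u (1 / k)) as [Hu1|Hu1].
  - specialize (HMx u (conj Hu Hu1)). change (G u <= - Rmin k (- G Mx)). lra.
  - assert (1 - k * u <= 0).
    { assert (k * (1 / k) <= k * u) by (apply Rmult_le_compat_l; lra).
      replace (k * (1 / k)) with 1 in H1 by (field; lra). lra. }
    pose proof (hpos ((k - 1) * u)). nra.
Qed.

Lemma sol_cont f k x y : is_solution f k p_infty x y -> forall s, 0 <= s ->
  continuity_pt x s /\ continuity_pt y s.
Proof.
  intros Hs s H. destruct (Hs s H I) as [Dx Dy].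
  split; eapply deriv_cont; eauto.
Qed.

Lemma x_nonneg f k (fd : forall r, ex_derive f r) x y : is_solution f k p_infty x y ->
  0 <= x 0 -> forall t, 0 <= t -> 0 <= x t.
Proof.
  intros Hs Hx0 t1 Ht1.
  set (g := fun s => f (y s) * (1 - x s - y s) - k).
  assert (Hgc : forall s, 0 <= s -> continuity_pt (fun s => Rabs (g s)) s).
  { intros s H. destruct (sol_cont f k x y Hs s H) as [Cx Cy].
    apply (continuity_pt_comp g Rabs); [|apply Rcontinuity_abs].
    unfold g. apply continuity_pt_minus; [|apply continuity_pt_const; intros a b; auto].
    apply continuity_pt_mult.
    - apply (continuity_pt_comp y f); auto. apply fcont; auto.
    - apply continuity_pt_minus; auto. apply continuity_pt_minus; auto.
      apply continuity_pt_const; intros a b; auto. }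
  destruct (continuity_ab_maj (fun s => Rabs (g s)) 0 t1) as [Mx [HMx HMxi]]; [lra| intros; apply Hgc; lra|].
  set (C := Rabs (g Mx)).
  assert (Hb : forall s, 0 <= s <= t1 -> - C <= g s <= C).
  { intros s Hs'. specialize (HMx s Hs'). cbv beta in HMx. fold C in HMx.
    pose proof (Rle_abs (g s)). pose proof (Rle_abs (- g s)). rewrite Rabs_Ropp in H0. lra. }
  assert (HFI : forall s, FI f k (x s) (y s) = x s * g s) by (intros; reflexivity).
  destruct (Req_dec (x 0) 0) as [E0|Hne].
  - assert (Hm := mono (fun s => - (x s ^ 2 * exp (- (2 * C) * s)))
       (fun s => - (2 * x s * FI f k (x s) (y s) * exp (- (2 * C) * s)
                    + x s ^ 2 * (- (2 * C) * exp (- (2 * C) * s)))) 0 t1 Ht1).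
    cbv beta in Hm. rewrite Rmult_0_r, exp_0, E0 in Hm.
    assert (He : 0 < exp (- (2 * C) * t1)) by apply exp_pos.
    assert (x t1 ^ 2 * exp (- (2 * C) * t1) <= 0).
    { assert (0 ^ 2 * 1 = 0) by ring. 
      enough (- (0 ^ 2 * 1) <= - (x t1 ^ 2 * exp (- (2 * C) * t1))) by lra.
      apply Hm.
      - intros c Hc. destruct (Hs c (proj1 Hc) I) as [Dx _].
        apply (opp_deriv (fun s => x s ^ 2 * exp (- (2 * C) * s))).
        apply (mul_deriv (fun s => x s ^ 2) (fun s => exp (- (2 * C) * s))); [apply sq_deriv; auto| apply exp_deriv].
      - intros c Hc. rewrite HFI. specialize (Hb c Hc).
        pose proof (exp_pos (- (2 * C) * c)). pose proof (pow2_ge_0 (x c)).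
        assert (0 <= x c ^ 2 * exp (- (2 * C) * c)) by (apply Rmult_le_pos; lra).
        nra. }
    assert (x t1 ^ 2 <= 0) by nra. nra.
  - destruct (Rle_dec 0 (x t1)) as [|Hneg]; [auto|exfalso].
    assert (Ht1p : 0 < t1) by (destruct (Req_dec t1 0) as [E|]; [subst; lra|lra]).
    destruct (Ranalysis5.IVT_interv (fun s => - x s) 0 t1) as [z [Hz Ez]].
    + intros a Ha. apply continuity_pt_opp. apply (sol_cont f k x y Hs a); lra.
    + exact Ht1p.
    + lra.
    + lra.
    + assert (Hm := mono (fun s => x s ^ 2 * exp ((2 * C) * s))
         (fun s => 2 * x s * FI f k (x s) (y s) * exp ((2 * C) * s)
                    + x s ^ 2 * ((2 * C) * exp ((2 * C) * s))) 0 z (proj1 Hz)).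
      cbv beta in Hm. rewrite Rmult_0_r, exp_0 in Hm.
      assert (Hxz : x z = 0) by lra. rewrite Hxz in Hm.
      assert (x 0 ^ 2 * 1 <= 0 ^ 2 * exp (2 * C * z)).
      { apply Hm.
        - intros c Hc. destruct (Hs c (proj1 Hc) I) as [Dx _].
          apply (mul_deriv (fun s => x s ^ 2) (fun s => exp (2 * C * s))); [apply sq_deriv; auto| apply exp_deriv].
        - intros c Hc. rewrite HFI. assert (Hc' : 0 <= c <= t1) by lra. specialize (Hb c Hc').
          pose proof (exp_pos (2 * C * c)). pose proof (pow2_ge_0 (x c)).
          assert (0 <= x c ^ 2 * exp (2 * C * c)) by (apply Rmult_le_pos; lra).
          nra. }
      assert (0 < x 0 ^ 2) by (apply pow2_gt_0; auto). nra.
Qed.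

Lemma y_nonneg f k x y : is_solution f k p_infty x y ->
  (forall t, 0 <= t -> 0 <= x t) -> 1 < k -> 0 <= y 0 -> forall t, 0 <= t -> 0 <= y t.
Proof.
  intros Hs Hx hk Hy0 t Ht.
  assert (Hm := mono (fun s => y s * exp (1 * s))
      (fun s => FR k (x s) (y s) * exp (1 * s) + y s * (1 * exp (1 * s))) 0 t Ht).
  cbv beta in Hm. rewrite Rmult_0_r, exp_0 in Hm.
  assert (y 0 * 1 <= y t * exp (1 * t)).
  { apply Hm.
    - intros c Hc. destruct (Hs c (proj1 Hc) I) as [_ Dy].
      apply (mul_deriv y (fun s => exp (1 * s))); [auto| apply exp_deriv].
    - intros c Hc. unfold FR. specialize (Hx c (proj1 Hc)).
      pose proof (exp_pos (1 * c)). replace (((k - 1) * x c - y c) * exp (1 * c) + y c * (1 * exp (1 * c))) with ((k-1) * x c * exp (1*c)) by ring. apply Rmult_le_pos; [apply Rmult_le_pos|]; lra. }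
  pose proof (exp_pos (1 * t)). nra.
Qed.

Lemma exp_sq a t : exp (a * t) * exp (a * t) = exp (- (- 2 * a * t)).
Proof. rewrite <- exp_plus. f_equal. ring. Qed.

Lemma global_conv f k (hk : 1 < k) (hpos : forall r, 0 < f r)
  (fd : forall r, ex_derive f r) gam (Hgam : 0 < gam)
  (HG : forall u, 0 <= u -> f ((k - 1) * u) * (1 - k * u) - k <= - gam)
  x y : is_solution f k p_infty x y -> 0 <= x 0 -> 0 <= y 0 -> converges_origin x y.
Proof.
  intros Hs Hx0 Hy0.
  assert (Hx := x_nonneg f k fd x y Hs Hx0).
  assert (Hy := y_nonneg f k x y Hs Hx hk Hy0).
  assert (Hk1 : 0 < k - 1) by lra.
  assert (Hyk : 0 <= y 0 / (k - 1)) by (apply Rdiv_le_0_compat; lra).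
  assert (Hyk2 : (k - 1) * (y 0 / (k - 1)) = y 0) by (field; lra).
  set (B := 2 * (x 0 + y 0 / (k - 1)) + 1).
  assert (HB : 0 < B) by (unfold B; lra).
  destruct (continuity_ab_maj f 0 ((k - 1) * B)) as [Mf [HMf HMfi]];
    [apply Rmult_le_pos; lra| intros; apply fcont; auto|].
  set (F := f Mf).
  assert (HF : 0 < F) by apply hpos.
  set (q := gam / (2 * F * B)).
  assert (Hq : 0 < q) by (unfold q; apply Rdiv_lt_0_compat; [lra| apply Rmult_lt_0_compat; [lra|lra]]).
  assert (HqFB : q * F * B = gam / 2) by (unfold q; field; lra).
  set (th := Rmax (1 / 2) (1 - q)).
  assert (Hth1 : 1 / 2 <= th) by apply Rmax_l.
  assert (Hth2 : 1 - q <= th) by apply Rmax_r.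
  assert (Hth3 : th < 1) by (apply Rmax_lub_lt; lra).
  assert (HthFB : (1 - th) * F * B <= gam / 2).
  { assert ((1 - th) * (F * B) <= q * (F * B)) by (apply Rmult_le_compat_r; nra). nra. }
  set (lam := Rmin (gam / 4) ((1 - th) / 2)).
  assert (Hl1 : lam <= gam / 4) by apply Rmin_l.
  assert (Hl2 : lam <= (1 - th) / 2) by apply Rmin_r.
  assert (Hlam : 0 < lam) by (apply Rmin_pos; lra).
  assert (Hbar := barrier2 p_infty
     (fun s => 1 * x s + (- (th * B)) * exp ((- lam) * s))
     (fun s => 1 * y s + (- ((k - 1) * B)) * exp ((- lam) * s))
     (fun s => 1 * FI f k (x s) (y s) + (- (th * B)) * ((- lam) * exp ((- lam) * s)))
     (fun s => 1 * FR k (x s) (y s) + (- ((k - 1) * B)) * ((- lam) * exp ((- lam) * s)))).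
  cbv beta in Hbar.
  assert (Hmain : forall t, 0 <= t -> x t < th * B * exp ((- lam) * t) /\ y t < (k - 1) * B * exp ((- lam) * t)).
  { intros t Ht.
    cut (1 * x t + - (th * B) * exp (- lam * t) < 0 /\
         1 * y t + - ((k - 1) * B) * exp (- lam * t) < 0); [lra|].
    refine (Hbar _ _ _ _ _ t Ht I).
    - intros s Hs0 _. destruct (Hs s Hs0 I) as [Dx Dy].
      split; apply lin_deriv; auto; apply exp_deriv.
    - rewrite Rmult_0_r, exp_0. unfold B in *. nra.
    - rewrite Rmult_0_r, exp_0. unfold B. nra.
    - intros s Hs0 _ Hh1 Hh2.
      set (e := exp (- lam * s)) in *.
      assert (He : 0 < e) by apply exp_pos.
      assert (He1 : e <= 1) by (apply exp_le1; nra).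
      set (b := B * e).
      assert (Hb : 0 < b) by (unfold b; nra).
      assert (HbB : b <= B) by (unfold b; nra).
      assert (Exs : x s = th * b) by (unfold b; lra).
      assert (Hys : y s <= (k - 1) * b) by (unfold b; lra).
      pose proof (Hy s (Rlt_le _ _ Hs0)) as Hys0.
      set (u := y s / (k - 1)).
      assert (Hu0 : 0 <= u) by (unfold u; apply Rdiv_le_0_compat; lra).
      assert (Eu : (k - 1) * u = y s) by (unfold u; field; lra).
      assert (Hub : u <= b).
      { apply (Rmult_le_reg_l (k - 1)); lra. }
      specialize (HG u Hu0). rewrite Eu in HG.
      assert (HfF : f (y s) <= F).
      { apply HMf. split; [lra|]. nra. }
      pose proof (hpos (y s)) as Hfy.
      assert (Hsplit : 1 - x s - y s = (1 - k * u) + (u - x s)) by (rewrite <- Eu; ring).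
      assert (Hux : u - x s <= (1 - th) * B) by (rewrite Exs; nra).
      assert (Hg1 : f (y s) * (u - x s) <= F * ((1 - th) * B)).
      { destruct (Rle_dec 0 (u - x s)).
        - apply Rmult_le_compat; lra.
        - assert (f (y s) * (u - x s) <= 0) by nra. nra. }
      assert (Hg : f (y s) * (1 - x s - y s) - k <= - gam / 2).
      { rewrite Hsplit. rewrite Rmult_plus_distr_l. nra. }
      unfold FI. fold e.
      assert (Hxs : 0 < x s) by (rewrite Exs; nra).
      replace (1 * (x s * (f (y s) * (1 - x s - y s) - k)) + - (th * B) * (- lam * e))
        with (x s * (f (y s) * (1 - x s - y s) - k + lam)) by (rewrite Exs; unfold b; ring).
      assert (f (y s) * (1 - x s - y s) - k + lam < 0) by lra.
      nra.
    - intros s Hs0 _ Hh2 Hh1.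
      set (e := exp (- lam * s)) in *.
      assert (He : 0 < e) by apply exp_pos.
      unfold FR. fold e.
      assert (Eys : y s = (k - 1) * B * e) by lra.
      assert (Hxs : x s <= th * B * e) by lra.
      assert (0 < B * e) by nra.
      assert (th - 1 + lam < 0) by lra.
      assert ((k - 1) * x s <= (k - 1) * (th * B * e)) by (apply Rmult_le_compat_l; lra).
      rewrite Eys.
      assert ((k - 1) * (B * e) * (th - 1 + lam) < 0).
      { assert (0 < (k - 1) * (B * e)) by (apply Rmult_lt_0_compat; lra). nra. }
      nra. }
  split.
  - apply (decay_lim x (2 * lam) ((th * B) ^ 2)); [lra|apply pow2_ge_0|].
    intros t Ht. destruct (Hmain t Ht) as [H1 _]. pose proof (Hx t Ht).
    replace (- (2 * lam * t)) with (- (- 2 * (- lam) * t)) by ring.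
    rewrite <- exp_sq.
    assert (x t ^ 2 <= (th * B * exp (- lam * t)) ^ 2) by (apply pow_incr; lra).
    lra.
  - apply (decay_lim y (2 * lam) (((k - 1) * B) ^ 2)); [lra|apply pow2_ge_0|].
    intros t Ht. destruct (Hmain t Ht) as [_ H1]. pose proof (Hy t Ht).
    replace (- (2 * lam * t)) with (- (- 2 * (- lam) * t)) by ring.
    rewrite <- exp_sq.
    assert (y t ^ 2 <= ((k - 1) * B * exp (- lam * t)) ^ 2) by (apply pow_incr; lra).
    lra.
Qed.

Theorem lemma4 (f : R -> R) (k : R)
  (hk : 1 < k)
  (hpos : forall r : R, 0 < f r)
  (hC1 : forall r : R, ex_derive f r /\ continuous (Derive f) r)
  (h0 : f 0 / k < 1)
  (huniq : forall I Rv : R, in_Z I Rv -> is_equilibrium f k I Rv -> I = 0 /\ Rv = 0) :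
  globally_stable_origin f k.
Proof.
  assert (fd : forall r, ex_derive f r) by (intros r; apply hC1).
  assert (h0' : f 0 < k).
  { apply (Rmult_lt_compat_r k) in h0; [|lra].
    replace (f 0 / k * k) with (f 0) in h0 by (field; lra). lra. }
  destruct (gamma_bound f k hk hpos fd h0' huniq) as [gam [Hgam HG]].
  destruct (local_decay f k hk hpos fd h0') as [rho [c [mu [Hr [Hc [Hmu Hd]]]]]].
  set (m := Rmin 1 c). set (M := Rmax 1 c).
  assert (Hm1 : m <= 1) by apply Rmin_l. assert (Hm2 : m <= c) by apply Rmin_r.
  assert (Hm : 0 < m) by (apply Rmin_pos; lra).
  assert (HM1 : 1 <= M) by apply Rmax_l. assert (HM2 : c <= M) by apply Rmax_r.
  assert (Hinit : forall L x y, 0 < L -> dist0 (x 0) (y 0) < sqrt (L / M) ->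
            x 0 ^ 2 + c * y 0 ^ 2 < L).
  { intros L x y HL Hdd. unfold dist0 in Hdd. apply sqrt_lt_0_alt in Hdd.
    assert (Hx2 := pow2_ge_0 (x 0)). assert (Hy2 := pow2_ge_0 (y 0)).
    assert (x 0 ^ 2 + y 0 ^ 2 < L / M) by exact Hdd.
    apply (Rmult_lt_compat_r M) in H; [|lra].
    replace (L / M * M) with L in H by (field; lra).
    assert (c * y 0 ^ 2 <= M * y 0 ^ 2) by (apply Rmult_le_compat_r; lra).
    assert (x 0 ^ 2 <= M * x 0 ^ 2) by nra.
    nra. }
  split; [split|].
  - intros eps Heps.
    set (L := Rmin rho (eps ^ 2 * m)).
    assert (HL1 : L <= rho) by apply Rmin_l. assert (HL2 : L <= eps ^ 2 * m) by apply Rmin_r.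
    assert (HL : 0 < L) by (apply Rmin_pos; [lra| apply Rmult_lt_0_compat; [apply pow_lt|]; lra]).
    exists (sqrt (L / M)). split; [apply sqrt_lt_R0; apply Rdiv_lt_0_compat; lra|].
    intros T x y _ Hs Hdd t Ht HtT.
    specialize (Hd L HL HL1 T x y Hs (Hinit L x y HL Hdd) t Ht HtT).
    assert (exp (- (mu * t)) <= 1) by (apply exp_le1; nra).
    assert (Hx2 := pow2_ge_0 (x t)). assert (Hy2 := pow2_ge_0 (y t)).
    assert (m * (x t ^ 2 + y t ^ 2) <= x t ^ 2 + c * y t ^ 2) by nra.
    assert (Hlt : x t ^ 2 + y t ^ 2 < eps ^ 2).
    { assert (m * (x t ^ 2 + y t ^ 2) < m * eps ^ 2) by nra.
      apply (Rmult_lt_reg_l m); lra. }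
    unfold dist0. rewrite <- (sqrt_pow2 eps) by lra.
    apply sqrt_lt_1_alt. split; [lra|exact Hlt].
  - exists (sqrt (rho / M)). split; [apply sqrt_lt_R0; apply Rdiv_lt_0_compat; lra|].
    intros x y Hs Hdd.
    assert (Hd' := Hd rho Hr (Rle_refl _) p_infty x y Hs (Hinit rho x y Hr Hdd)).
    split.
    + apply (decay_lim x mu rho); [lra|lra|].
      intros t Ht. specialize (Hd' t Ht I).
      assert (Hy2 := pow2_ge_0 (y t)). nra.
    + apply (decay_lim y mu (rho / c)); [lra|apply Rdiv_le_0_compat; lra|].
      intros t Ht. specialize (Hd' t Ht I).
      assert (Hx2 := pow2_ge_0 (x t)).
      assert (c * y t ^ 2 < rho * exp (- (mu * t))) by lra.
      apply (Rmult_le_reg_l c); [lra|].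
      replace (c * (rho / c * exp (- (mu * t)))) with (rho * exp (- (mu * t))) by (field; lra).
      lra.
  - intros x y Hs [[Hx0 _] [[Hy0 _] _]].
    exact (global_conv f k hk hpos fd gam Hgam HG x y Hs Hx0 Hy0).
Qed.
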